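(* rATL is strictly more expressive than rCTL, in the following sense: (i) for every rCTL formula $\varphi$ there is an rATL formula $\varphi^\star$ such that $V(s,\varphi^\star)=V_{rCTL}(s,\varphi)$ for every Kripke structure $\mathcal{K}$ and every state $s$ of $\mathcal{K}$ (with $\varphi^\star$ evaluated in $\mathcal{S}_\mathcal{K}$); and (ii) there exists an rATL formula $\psi$ such that for no rCTL formula $\chi$ it holds that $V(s,\psi)=V_{rCTL}(s,\chi)$ for every concurrent game structure $\mathcal{S}$ and every state $s$ of $\mathcal{S}$, where $V_{rCTL}$ on a concurrent game structure is evaluated in its underlying Kripke structure.
   Context: Fix a finite set $\mathrm{AP}$ of atomic propositions. A concurrent game structure (CGS) is a tuple $\mathcal{S}=(St,Ag,Ac,\delta,\ell)$ where $St$ is a finite set of states, $Ag$ a finite set of agents, $Ac$ a finite set of actions, $\ell:St\to 2^{\mathrm{AP}}$ a labeling, and $\delta:St\times AV\to St$ a transition function, where $AV$ is the set of action vectors for $Ag$ (an action vector for $A\subseteq Ag$ is a map $A\to Ac$). A state $s'$ is a successor of $s$ if $s'=\delta(s,v)$ for some $v\in AV$. A path is an infinite sequence $\pi=s_0s_1s_2\cdots$ of states with $s_{n+1}$ a successor of $s_n$ for all $n$; write $\pi[n]=s_n$. A strategy for an agent is a function $f:St^+\to Ac$. For $A\subseteq Ag$ and a set $F_A=\{f_a\mid a\in A\}$ of strategies, one for each agent in $A$, $out(s,F_A)$ is the set of paths $s_0s_1\cdots$ with $s_0=s$ such that for every $n\ge 0$ there is $v\in AV$ with $v(a)=f_a(s_0\cdots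 s_n)$ for all $a\in A$ and $s_{n+1}=\delta(s_n,v)$. $\mathbb{B}_4=\{1111,0111,0011,0001,0000\}$ is totally ordered by $1111\succ0111\succ0011\succ0001\succ0000$; for $b=b_1b_2b_3b_4\in\mathbb{B}_4$ and $k\in\{1,2,3,4\}$, $b[k]=b_k$; max and min on $\mathbb{B}_4$ refer to this order, and on bits to $0<1$. rATL formulas: state formulas $\varphi ::= p \mid \neg\varphi\mid\varphi\vee\varphi\mid\varphi\wedge\varphi\mid\varphi\to\varphi\mid\langle\!\langle A\rangle\!\rangle\Phi\mid[\![A]\!]\Phi$ and path formulas $\Phi::=\dot{\bigcirc}\varphi\mid\dot\Diamond\varphi\mid\dot\Box\varphi$, with $p\in\mathrm{AP}$ and $A$ a set of agents; an rATL formula is a state formula. On a CGS the valuation $V$ maps (state, state formula) and (path, path formula) pairs to $\mathbb{B}_4$: $V(s,p)=1111$ if $p\in\ell(s)$ and $0000$ otherwise; $V(s,\varphi_1\vee\varphi_2)=\max(V(s,\varphi_1),V(s,\varphi_2))$; $V(s,\varphi_1\wedge\varphi_2)=\min(V(s,\varphi_1),V(s,\varphi_2))$; $V(s,\neg\varphi)=0000$ if $V(s,\varphi)=1111$ and $1111$ otherwise; $V(s,\varphi_1\to\varphi_2)=1111$ if $V(s,\varphi_1)\preceq V(s,\varphi_2)$ and $V(s,\varphi_2)$ otherwise; $V(s,\langle\!\langle A\rangle\!\rangle\Phi)$ is the maximal $b\in\mathbb{B}_4$ such that there is a set $F_A$ of strategies (one per agent in $A$) with $V(\pi,\Phi)\succeq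 b$ for all $\pi\in out(s,F_A)$; $V(s,[\![A]\!]\Phi)$ is the maximal $b\in\mathbb{B}_4$ such that for every such $F_A$ there is $\pi\in out(s,F_A)$ with $V(\pi,\Phi)\succeq b$. For paths: $V(\pi,\dot\bigcirc\varphi)[k]=V(\pi[1],\varphi)[k]$; $V(\pi,\dot\Diamond\varphi)[k]=\max_{i\ge0}V(\pi[i],\varphi)[k]$; $V(\pi,\dot\Box\varphi)=b_1b_2b_3b_4$ with $b_1=\min_{i\ge0}V(\pi[i],\varphi)[1]$, $b_2=\max_{i\ge0}\min_{j\ge i}V(\pi[j],\varphi)[2]$, $b_3=\min_{i\ge0}\max_{j\ge i}V(\pi[j],\varphi)[3]$, $b_4=\max_{i\ge0}V(\pi[i],\varphi)[4]$. A Kripke structure is $\mathcal{K}=(S,I,R,L)$ with finite state set $S$, initial states $I\subseteq S$, transition relation $R\subseteq S\times S$ such that every state has an $R$-successor, and labeling $L:S\to2^{\mathrm{AP}}$; a path is an infinite sequence $s_0s_1\cdots$ with $(s_i,s_{i+1})\in R$; $\mathit{paths}(s)$ is the set of paths starting in $s$. rCTL formulas: state formulas $\varphi::=p\mid\neg\varphi\mid\varphi\vee\varphi\mid\varphi\wedge\varphi\mid\varphi\to\varphi\mid\exists\Phi\mid\forall\Phi$, path formulas $\Phi::=\dot\bigcirc\varphi\mid\dot\Diamond\varphi\mid\dot\Box\varphi$. The valuation $V_{rCTL}$ is defined exactly as $V$ above for atomic propositions, Boolean connectives and $\dot\bigcirc,\dot\Diamond,\dot\Box$ (with $L$ in place of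 $\ell$), and $V_{rCTL}(s,\exists\Phi)=\max_{\pi\in\mathit{paths}(s)}V_{rCTL}(\pi,\Phi)$, $V_{rCTL}(s,\forall\Phi)=\min_{\pi\in\mathit{paths}(s)}V_{rCTL}(\pi,\Phi)$. The underlying Kripke structure of a CGS $\mathcal{S}$ has the same states and labeling, with $R=\{(s,s')\mid s'\text{ is a successor of }s\}$. The CGS associated with $\mathcal{K}$ is $\mathcal{S}_\mathcal{K}=(S,\{a\},S,\delta,L)$ with a single agent $a$, actions $S$, and $\delta(s,s')=s'$ if $(s,s')\in R$, and $\delta(s,s')=s''$ for some fixed $s''$ with $(s,s'')\in R$ otherwise (action vectors for $\{a\}$ are identified with actions). *)

(* Defs.v *)
From Stdlib Require Import ClassicalEpsilon.
From mathcomp Require Import all_boot.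

Set Implicit Arguments.
Unset Strict Implicit.
Unset Printing Implicit Defensive.

Inductive B4 := b1111 | b0111 | b0011 | b0001 | b0000.

Definition b4_rank (b : B4) : nat :=
  match b with b1111 => 4 | b0111 => 3 | b0011 => 2 | b0001 => 1 | b0000 => 0 end.

Definition b4_le (b c : B4) : bool := b4_rank b <= b4_rank c.
Definition b4_max (b c : B4) : B4 := if b4_le b c then c else b.
Definition b4_min (b c : B4) : B4 := if b4_le b c then b else c.

Definition b4_is_top (b : B4) : bool := if b is b1111 then true else false.

(* b[k] for k in {1,2,3,4} *)
Definition bit (b : B4) (k : nat) : bool :=
  match b with
  | b1111 => true
  | b0111 => 2 <= k
  | b0011 => 3 <= k
  | b0001 => 4 <= k
  | b0000 => false
  end.

(* The element b1 b2 b3 b4 of B_4 given by its four bits (only applied to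
   monotone bit vectors, for which it is the inverse of [bit]). *)
Definition of_bits (x1 x2 x3 x4 : bool) : B4 :=
  if x1 then b1111 else if x2 then b0111 else if x3 then b0011
  else if x4 then b0001 else b0000.

Definition pb (P : Prop) : bool :=
  if excluded_middle_informative P then true else false.

Definition max_sat (P : B4 -> Prop) : B4 :=
  if pb (P b1111) then b1111 else if pb (P b0111) then b0111
  else if pb (P b0011) then b0011 else if pb (P b0001) then b0001 else b0000.

Definition sup_bit (g : nat -> B4) (k : nat) : bool := pb (exists i, bit (g i) k).
Definition inf_bit (g : nat -> B4) (k : nat) : bool := pb (forall i, bit (g i) k).
Definition liminf_bit (g : nat -> B4) (k : nat) : bool :=
  pb (exists i, forall j, i <= j -> bit (g j) k).
Definition limsup_bit (g : nat -> B4) (k : nat) : bool :=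
  pb (forall i, exists j, i <= j /\ bit (g j) k).

(* valuation of "eventually" and "always" along the sequence g i = V(pi[i], phi) *)
Definition ev_val (g : nat -> B4) : B4 :=
  of_bits (sup_bit g 1) (sup_bit g 2) (sup_bit g 3) (sup_bit g 4).
Definition alw_val (g : nat -> B4) : B4 :=
  of_bits (inf_bit g 1) (liminf_bit g 2) (limsup_bit g 3) (sup_bit g 4).

Inductive pathF (F : Type) : Type :=
| PNext of F
| PEv of F
| PAlw of F.

Inductive rATL (AP : Type) (Agt : finType) : Type :=
| AProp of AP
| ANeg of rATL AP Agt
| AOr of rATL AP Agt & rATL AP Agt
| AAnd of rATL AP Agt & rATL AP Agt
| AImp of rATL AP Agt & rATL AP Agt
| ACoal of {set Agt} & pathF (rATL AP Agt)
| ADual of {set Agt} & pathF (rATL AP Agt).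

Inductive rCTL (AP : Type) : Type :=
| CProp of AP
| CNeg of rCTL AP
| COr of rCTL AP & rCTL AP
| CAnd of rCTL AP & rCTL AP
| CImp of rCTL AP & rCTL AP
| CEx of pathF (rCTL AP)
| CAll of pathF (rCTL AP).

Record CGS (AP : finType) (Agt : finType) := {
  St : finType;
  Ac : finType;
  delta : St -> {ffun Agt -> Ac} -> St;
  lab : St -> {set AP}
}.

Section CGSsem.
Variables (AP Agt : finType) (S : CGS AP Agt).

Definition successor (s s' : St S) : Prop := exists v, s' = delta s v.

(* strategies f : St^+ -> Ac (histories as non-empty sequences) *)
Definition strategy := seq (St S) -> Ac S.

Definition prefix (pi : nat -> St S) (n : nat) : seq (St S) :=
  [seq pi i | i <- iota 0 n.+1].

(* out(s, F_A): F assigns a strategy to each agent; only agents in A matter *)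
Definition out (A : {set Agt}) (F : Agt -> strategy) (s : St S)
    (pi : nat -> St S) : Prop :=
  pi 0 = s /\
  forall n, exists v : {ffun Agt -> Ac S},
    (forall a, a \in A -> v a = F a (prefix pi n)) /\ pi n.+1 = delta (pi n) v.

Fixpoint Vatl (s : St S) (phi : rATL AP Agt) {struct phi} : B4 :=
  match phi with
  | AProp p => if p \in lab s then b1111 else b0000
  | ANeg f => if b4_is_top (Vatl s f) then b0000 else b1111
  | AOr f g => b4_max (Vatl s f) (Vatl s g)
  | AAnd f g => b4_min (Vatl s f) (Vatl s g)
  | AImp f g => if b4_le (Vatl s f) (Vatl s g) then b1111 else Vatl s g
  | ACoal A Phi =>
      max_sat (fun b => exists F : Agt -> strategy, forall pi, out A F s pi ->
        b4_le b (match Phi with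
                 | PNext f => Vatl (pi 1) f
                 | PEv f => ev_val (fun i => Vatl (pi i) f)
                 | PAlw f => alw_val (fun i => Vatl (pi i) f)
                 end))
  | ADual A Phi =>
      max_sat (fun b => forall F : Agt -> strategy, exists pi, out A F s pi /\
        b4_le b (match Phi with
                 | PNext f => Vatl (pi 1) f
                 | PEv f => ev_val (fun i => Vatl (pi i) f)
                 | PAlw f => alw_val (fun i => Vatl (pi i) f)
                 end))
  end.

Definition cgs_rel : rel (St S) :=
  fun s s' => [exists v : {ffun Agt -> Ac S}, s' == delta s v].

Definition cgs_total : Prop := forall s : St S, exists s', successor s s'.

End CGSsem.

Section Ksem.
Variables (AP : finType) (T : finType) (R : rel T) (L : T -> {set AP}).

Definition kpath (s : T) (pi : nat -> T) : Prop :=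
  pi 0 = s /\ forall n, R (pi n) (pi n.+1).

Fixpoint Vctl (s : T) (phi : rCTL AP) {struct phi} : B4 :=
  match phi with
  | CProp p => if p \in L s then b1111 else b0000
  | CNeg f => if b4_is_top (Vctl s f) then b0000 else b1111
  | COr f g => b4_max (Vctl s f) (Vctl s g)
  | CAnd f g => b4_min (Vctl s f) (Vctl s g)
  | CImp f g => if b4_le (Vctl s f) (Vctl s g) then b1111 else Vctl s g
  | CEx Phi =>
      max_sat (fun b => exists pi, kpath s pi /\
        b4_le b (match Phi with
                 | PNext f => Vctl (pi 1) f
                 | PEv f => ev_val (fun i => Vctl (pi i) f)
                 | PAlw f => alw_val (fun i => Vctl (pi i) f)
                 end))
  | CAll Phi =>
      max_sat (fun b => forall pi, kpath s pi ->
        b4_le b (match Phi with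
                 | PNext f => Vctl (pi 1) f
                 | PEv f => ev_val (fun i => Vctl (pi i) f)
                 | PAlw f => alw_val (fun i => Vctl (pi i) f)
                 end))
  end.
End Ksem.

Record Kripke (AP : finType) := {
  KS : finType;
  KI : {set KS};
  KR : rel KS;
  KL : KS -> {set AP};
  KR_total : forall s, exists s', KR s s'
}.

Definition VK (AP : finType) (K : Kripke AP) (s : KS K) (phi : rCTL AP) : B4 :=
  Vctl (@KR _ K) (@KL _ K) s phi.

(* The CGS S_K associated with K: single agent (type unit), actions = states;
   d s is the fixed R-successor s'' of s used for non-successor actions. *)
Definition SK (AP : finType) (K : Kripke AP) (d : KS K -> KS K) : CGS AP unit :=
  {| St := KS K;
     Ac := KS K;
     delta := fun s (v : {ffun unit -> KS K}) =>
                if @KR _ K s (v tt) then v tt else d s;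
     lab := @KL _ K |}.

(* Main.v *)
Require Import Defs.
From mathcomp Require Import all_boot.
From Stdlib Require Import FunctionalExtensionality ClassicalEpsilon.

Set Implicit Arguments.
Unset Strict Implicit.
Unset Printing Implicit Defensive.

Lemma pb_ext (P Q : Prop) : (P <-> Q) -> pb P = pb Q.
Proof.
rewrite /pb => H; case: excluded_middle_informative => HP;
  case: excluded_middle_informative => HQ //; exfalso; tauto.
Qed.

Lemma max_sat_ext (P Q : B4 -> Prop) : (forall b, P b <-> Q b) -> max_sat P = max_sat Q.
Proof.
move=> H; rewrite /max_sat !(pb_ext (H _)) //.
Qed.

Section Tr.
Variable AP : finType.

Fixpoint tr (phi : rCTL AP) : rATL AP unit :=
  match phi with
  | CProp p => AProp unit p
  | CNeg f => ANeg (tr f)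
  | COr f g => AOr (tr f) (tr g)
  | CAnd f g => AAnd (tr f) (tr g)
  | CImp f g => AImp (tr f) (tr g)
  | CEx Phi => ADual set0 (match Phi with PNext f => PNext (tr f)
                | PEv f => PEv (tr f) | PAlw f => PAlw (tr f) end)
  | CAll Phi => ACoal set0 (match Phi with PNext f => PNext (tr f)
                | PEv f => PEv (tr f) | PAlw f => PAlw (tr f) end)
  end.

Variables (K : Kripke AP) (d : KS K -> KS K) (Hd : forall s, @KR _ K s (d s)).

Lemma out_SK (F : unit -> strategy (SK d)) s pi :
  out (S := SK d) set0 F s pi <-> kpath (@KR _ K) s pi.
Proof.
split.
- case=> H0 H; split => // n; case: (H n) => v [_ ->] /=.
  by case: ifP => // _; apply: Hd.
- case=> H0 H; split => // n; exists [ffun _ => pi n.+1]; split.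
    by move=> a; rewrite in_set0.
  by rewrite /= ffunE H.
Qed.

Lemma dual_eq (X Y : (nat -> KS K) -> B4) s : (forall pi, X pi = Y pi) ->
  max_sat (fun b => forall F : unit -> strategy (SK d), exists pi,
     out (S := SK d) set0 F s pi /\ b4_le b (X pi)) =
  max_sat (fun b => exists pi, kpath (@KR _ K) s pi /\ b4_le b (Y pi)).
Proof.
move=> HXY; apply: max_sat_ext => b; split.
- move=> /(_ (fun _ _ => s)) [pi [/out_SK Hp Hb]]; exists pi; by rewrite -HXY.
- move=> [pi [Hp Hb]] F; exists pi; split; first by apply/out_SK.
  by rewrite HXY.
Qed.

Lemma coal_eq (X Y : (nat -> KS K) -> B4) s : (forall pi, X pi = Y pi) ->
  max_sat (fun b => exists F : unit -> strategy (SK d), forall pi,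
     out (S := SK d) set0 F s pi -> b4_le b (X pi)) =
  max_sat (fun b => forall pi, kpath (@KR _ K) s pi -> b4_le b (Y pi)).
Proof.
move=> HXY; apply: max_sat_ext => b; split.
- move=> [F HF] pi Hp; rewrite -HXY; apply: HF; exact/out_SK.
- move=> H; exists (fun _ _ => s) => pi /out_SK Hp; rewrite HXY; exact: H.
Qed.

Fixpoint tr_ok (phi : rCTL AP) (s : KS K) {struct phi} :
  @Vatl _ _ (SK d) s (tr phi) = @VK _ K s phi.
Proof.
destruct phi as [p|f|f g|f g|f g|Phi|Phi]; rewrite /VK /=.
- by [].
- by rewrite tr_ok.
- by rewrite !tr_ok.
- by rewrite !tr_ok.
- by rewrite !tr_ok.
- destruct Phi as [f|f|f]; apply: dual_eq => pi.
  + exact: tr_ok.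
  + congr ev_val; apply: functional_extensionality => i; exact: tr_ok.
  + congr alw_val; apply: functional_extensionality => i; exact: tr_ok.
- destruct Phi as [f|f|f]; apply: coal_eq => pi.
  + exact: tr_ok.
  + congr ev_val; apply: functional_extensionality => i; exact: tr_ok.
  + congr alw_val; apply: functional_extensionality => i; exact: tr_ok.
Qed.

End Tr.

Section Sep.
Variables (AP : finType) (p0 : AP).

Definition labB (b : bool) : {set AP} := if b then [set p0] else set0.

Definition S1 : CGS AP bool :=
  {| St := bool; Ac := bool; delta := fun _ (v : {ffun bool -> bool}) => v true;
     lab := labB |}.
Definition S2 : CGS AP bool :=
  {| St := bool; Ac := bool; delta := fun _ (v : {ffun bool -> bool}) => v false;
     lab := labB |}.

Definition psi : rATL AP bool := ACoal [set true] (PNext (AProp bool p0)).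

Lemma S1_total : cgs_total S1.
Proof. move=> s; exists s; exists [ffun _ => s]; by rewrite /S1 /= ffunE. Qed.
Lemma S2_total : cgs_total S2.
Proof. move=> s; exists s; exists [ffun _ => s]; by rewrite /S2 /= ffunE. Qed.

Lemma rel12 : @cgs_rel _ _ S1 = @cgs_rel _ _ S2.
Proof.
apply: functional_extensionality => x; apply: functional_extensionality => y.
rewrite /cgs_rel; apply/existsP/existsP => _; exists [ffun _ => y]; by rewrite /S1 /S2 /= ffunE.
Qed.

Lemma V1 : @Vatl _ _ S1 false psi = b1111.
Proof.
rewrite /= /max_sat.
have -> : pb (exists F : bool -> strategy S1, forall pi, out [set true] F false pi ->
   b4_le b1111 (if p0 \in labB (pi 1) then b1111 else b0000)) = true.
  rewrite /pb; case: excluded_middle_informative => // H; exfalso; apply: H.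
  exists (fun _ _ => true) => pi [H0 H]; case: (H 0) => v [Hv ->] /=.
  by rewrite /S1 /= Hv ?in_set1 ?eqxx.
by [].
Qed.

Lemma V2 : @Vatl _ _ S2 false psi <> b1111.
Proof.
rewrite /= /max_sat.
have -> : pb (exists F : bool -> strategy S2, forall pi, out [set true] F false pi ->
   b4_le b1111 (if p0 \in labB (pi 1) then b1111 else b0000)) = false.
  rewrite /pb; case: excluded_middle_informative => // -[F HF]; exfalso.
  have : b4_le b1111 (if p0 \in labB false then b1111 else b0000).
    apply: (HF (fun _ => false)); split => // n.
    exists [ffun a => if a then F true (Defs.prefix (S:=S2) (fun _ => false) n) else false].
    split => [[|]|]; rewrite ?ffunE ?in_set1 //.
    by rewrite /S2 /= ffunE.
  by rewrite /labB in_set0.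
by case: (pb _); [|case: (pb _); [|case: (pb _)]].
Qed.

End Sep.

Theorem theorem4 (AP : finType) (p0 : AP) :
  (forall phi : rCTL AP, exists phistar : rATL AP unit,
     forall (K : Kripke AP) (d : KS K -> KS K), (forall s, @KR _ K s (d s)) ->
     forall s : KS K, @Vatl _ _ (SK d) s phistar = @VK _ K s phi)
  /\
  (exists (Agt : finType) (psi : rATL AP Agt), forall chi : rCTL AP,
     ~ (forall S : CGS AP Agt, cgs_total S ->
          forall s : St S, @Vatl _ _ S s psi = @Vctl _ _ (@cgs_rel _ _ S) (@lab _ _ S) s chi)).
Proof.
split.
- move=> phi; exists (tr phi) => K d Hd s; exact: tr_ok.
- exists bool, (psi p0) => chi H.
  have E1 := H _ (@S1_total _ p0) false.
  have E2 := H _ (@S2_total _ p0) false.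
  apply: (V2 (p0 := p0)); rewrite E2 -rel12 -[RHS](@V1 _ p0) E1 //.
Qed.
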